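(* For any positive integer $D$ there are no points ${\bf p}_1,\dots,{\bf p}_6\in\mathbb R^D$ such that $|{\bf p}_i-{\bf p}_{i+1}|\le 1$ and $|{\bf p}_i-{\bf p}_{i+3}|>2$ for all $i$, indices taken modulo $6$. *)

(* Defs.v *)
From Stdlib Require Import Reals Lra Lia.
Open Scope R_scope.

(* A point of R^D is represented by its coordinate function; only the
   coordinates 0 .. D-1 are relevant. *)
Definition point := nat -> R.

Fixpoint sqdist (D : nat) (p q : point) : R :=
  match D with
  | O => 0
  | S D' => sqdist D' p q + (p D' - q D') ^ 2
  end.

Definition edist (D : nat) (p q : point) : R := sqrt (sqdist D p q).

(* Main.v *)
Require Import Defs.
From Stdlib Require Import Reals Lra Lia Psatz.
Open Scope R_scope.
Lemma sc (x0 x1 x2 x3 x4 x5 : R) :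
  (x0 - x3)^2 + (x1 - x4)^2 + (x2 - x5)^2 <=
  2*((x0-x1)^2+(x1-x2)^2+(x2-x3)^2+(x3-x4)^2+(x4-x5)^2+(x5-x0)^2).
Proof.
set (a0 := x1-x0); set (a1 := x2-x1); set (a2 := x3-x2);
set (a3 := x4-x3); set (a4 := x5-x4); set (a5 := x0-x5).
set (b0 := a0+a3); set (b1 := a1+a4); set (b2 := a2+a5).
set (c0 := a0-a3); set (c1 := a1-a4); set (c2 := a2-a5).
assert (E : 2*((x0-x1)^2+(x1-x2)^2+(x2-x3)^2+(x3-x4)^2+(x4-x5)^2+(x5-x0)^2)
  - ((x0 - x3)^2 + (x1 - x4)^2 + (x2 - x5)^2)
  = b0^2+b1^2+b2^2 + /4*(c0-c1+c2)^2).
{ unfold b0,b1,b2,c0,c1,c2,a0,a1,a2,a3,a4,a5. field. }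
assert (0 <= b0^2+b1^2+b2^2 + /4*(c0-c1+c2)^2) by (pose proof (pow2_ge_0 b0); pose proof (pow2_ge_0 b1); pose proof (pow2_ge_0 b2); pose proof (pow2_ge_0 (c0-c1+c2)); lra).
lra.
Qed.

Lemma sqdist_ge0 D p q : 0 <= sqdist D p q.
Proof. induction D; simpl. lra. pose proof (pow2_ge_0 (p D - q D)); lra. Qed.

Lemma vec D (p0 p1 p2 p3 p4 p5 : point) :
  sqdist D p0 p3 + sqdist D p1 p4 + sqdist D p2 p5 <=
  2*(sqdist D p0 p1 + sqdist D p1 p2 + sqdist D p2 p3 + sqdist D p3 p4
     + sqdist D p4 p5 + sqdist D p5 p0).
Proof.
induction D; simpl. lra.
pose proof (sc (p0 D) (p1 D) (p2 D) (p3 D) (p4 D) (p5 D)). lra.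
Qed.

Lemma le1 D p q : edist D p q <= 1 -> sqdist D p q <= 1.
Proof.
unfold edist; intro H. pose proof (sqdist_ge0 D p q).
rewrite <- (sqrt_def (sqdist D p q)) by lra.
pose proof (sqrt_pos (sqdist D p q)). nra.
Qed.

Lemma gt2 D p q : edist D p q > 2 -> sqdist D p q > 4.
Proof.
unfold edist; intro H. pose proof (sqdist_ge0 D p q).
rewrite <- (sqrt_def (sqdist D p q)) by lra. nra.
Qed.

Theorem mainTheorem13 (D : nat) (HD : (0 < D)%nat) :
  ~ exists P : nat -> point,
      forall i : nat, (i < 6)%nat ->
        edist D (P i) (P ((i + 1) mod 6)%nat) <= 1 /\
        edist D (P i) (P ((i + 3) mod 6)%nat) > 2.
Proof.
intros [P H].
destruct (H 0%nat ltac:(lia)) as [s0 d0].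
destruct (H 1%nat ltac:(lia)) as [s1 d1].
destruct (H 2%nat ltac:(lia)) as [s2 d2].
destruct (H 3%nat ltac:(lia)) as [s3 _].
destruct (H 4%nat ltac:(lia)) as [s4 _].
destruct (H 5%nat ltac:(lia)) as [s5 _].
simpl in *.
apply le1 in s0, s1, s2, s3, s4, s5. apply gt2 in d0, d1, d2.
pose proof (vec D (P 0%nat) (P 1%nat) (P 2%nat) (P 3%nat) (P 4%nat) (P 5%nat)).
lra.
Qed.
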